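(* Let $m,\nu$ be positive integers with $\nu\ge2$ and $\ell(m)\ge\nu-1$, where $\ell(m)$ is the number of prime factors of $m$ counted with multiplicity. Then there exists a numerical semigroup $S$ with multiplicity $m(S)=m$, embedding dimension $\nu(S)=\nu$, and $\alpha$-rectangular Apéry set.
   Context: A numerical semigroup is a submonoid $S$ of $(\mathbb N,+)$ with finite complement in $\mathbb N$; $g_1<\dots<g_\nu$ is its minimal system of generators, $\nu(S)=\nu$ its embedding dimension, $m(S)=g_1$ its multiplicity, and $\mathrm{Ap}(S)=\{s\in S: s-m(S)\notin S\}$. For $i=2,\dots,\nu$, $\alpha_i=\max\{h\in\mathbb N: hg_i\in\mathrm{Ap}(S)\}$, and $\mathrm{Ap}(S)$ is $\alpha$-rectangular if $\mathrm{Ap}(S)=\{\sum_{i=2}^\nu\lambda_ig_i: 0\le\lambda_i\le\alpha_i\}$. *)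

(* Defs.v *)
From mathcomp Require Import all_boot.
Set Implicit Arguments. Unset Strict Implicit. Unset Printing Implicit Defensive.

Definition numerical_semigroup (S : pred nat) : Prop :=
  [/\ 0 \in S,
      (forall a b, a \in S -> b \in S -> a + b \in S)
    & exists N, forall n, N <= n -> n \in S].

Definition minimal_generator (S : pred nat) (g : nat) : Prop :=
  [/\ g \in S, 0 < g &
      ~ (exists a b, [/\ 0 < a, 0 < b, a \in S, b \in S & a + b = g])].

Definition minimal_generators (S : pred nat) (gs : seq nat) : Prop :=
  sorted ltn gs /\ (forall g, g \in gs <-> minimal_generator S g).

Definition multiplicity (S : pred nat) (m : nat) : Prop :=
  [/\ m \in S, 0 < m & forall s, s \in S -> 0 < s -> m <= s].

Definition embedding_dimension (S : pred nat) (nu : nat) : Prop :=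
  exists gs, minimal_generators S gs /\ size gs = nu.

(* s \in Ap(S, m)  iff  s \in S and s - m \notin S (as an integer). *)
Definition apery (S : pred nat) (m s : nat) : Prop :=
  s \in S /\ ~ (m <= s /\ (s - m) \in S).

Definition is_alpha (S : pred nat) (m g a : nat) : Prop :=
  apery S m (a * g) /\ (forall h, apery S m (h * g) -> h <= a).

(* Ap(S) is alpha-rectangular, with gs = [:: g_1 & rest] the minimal
   generators, m(S) = g_1, and alphas the alpha_i for i = 2..nu. *)
Definition alpha_rectangular (S : pred nat) : Prop :=
  exists gs, minimal_generators S gs /\
  exists alphas : seq nat,
    [/\ size alphas = (size gs).-1,
        (forall i, i < size alphas ->
           is_alpha S (head 0 gs) (nth 0 (behead gs) i) (nth 0 alphas i))
      & forall x, apery S (head 0 gs) x <->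
          exists lam : seq nat,
            [/\ size lam = size alphas,
                (forall i, i < size lam -> nth 0 lam i <= nth 0 alphas i)
              & x = \sum_(i < size lam) nth 0 lam i * nth 0 (behead gs) i]].

Definition bigomega (m : nat) : nat := \sum_(p <- primes m) logn p m.

(* Main.v *)
Require Import Defs.
From mathcomp Require Import all_boot zify.
From Stdlib Require Import ClassicalEpsilon.
Set Implicit Arguments. Unset Strict Implicit. Unset Printing Implicit Defensive.

Lemma bigomega_seq n (s : seq nat) : 0 < n -> uniq s -> {subset primes n <= s} ->
  \sum_(q <- s) logn q n = bigomega n.
Proof.
move=> n0 us sub; rewrite (bigID (fun q => q \in primes n)) /=.
rewrite [X in _ + X]big1 ?addn0; last first.
  by move=> q /negbTE H; apply/eqP; rewrite -leqn0 leqNgt logn_gt0 H.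
rewrite -big_filter /bigomega; apply: perm_big.
apply: uniq_perm; first by rewrite filter_uniq.
  exact: primes_uniq.
by move=> q; rewrite mem_filter; case E: (q \in primes n) => //=; rewrite sub.
Qed.

Lemma bigomegaM p n : prime p -> 0 < n -> bigomega (p * n) = (bigomega n).+1.
Proof.
move=> pp n0; have p0 := prime_gt0 pp.
have pn0 : 0 < p * n by rewrite muln_gt0 p0.
rewrite {1}/bigomega (eq_bigr (fun q => logn q p + logn q n)); last first.
  by move=> q _; rewrite lognM.
rewrite big_split /= !bigomega_seq ?primes_uniq //.
- by rewrite /bigomega primes_prime // big_seq1 logn_prime // eqxx.
- by move=> q; rewrite !mem_primes => /and3P[-> _ /= qd]; rewrite pn0 dvdn_mull.
- by move=> q; rewrite !mem_primes => /and3P[-> _ /= qd]; rewrite pn0 dvdn_mulr.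
Qed.

Lemma factor k : 0 < k -> forall m, 0 < m -> k <= bigomega m ->
  exists a : nat -> nat, (forall i, i < k -> 1 < a i) /\ m = \prod_(i < k) a i.
Proof.
elim: k => // k IH _ m m0 hk.
have m1 : 1 < m.
  have : m != 1 by apply: contraTneq hk => ->; rewrite /bigomega big_nil.
  lia.
have pp := pdiv_prime m1; set p := pdiv m in pp.
have em : m = p * (m %/ p) by rewrite mulnC divnK // pdiv_dvd.
have m'0 : 0 < m %/ p by rewrite divn_gt0 ?prime_gt0 // dvdn_leq // pdiv_dvd.
case: k IH hk => [|k] IH hk.
  exists (fun _ => m); split; first by move=> i; case: i.
  by rewrite big_ord1.
rewrite em bigomegaM // ltnS in hk.
have [a' [ha' ea']] := IH erefl _ m'0 hk.
exists (fun i => if i < k.+1 then a' i else p); split.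
  move=> i; case: ifP => [|_ _]; first by move=> /ha'.
  exact: prime_gt1.
rewrite big_ord_recr /= ltnn (eq_bigr (fun i : 'I_k.+1 => a' i)); last first.
  by move=> i _; rewrite ltn_ord.
by rewrite -ea' mulnC -em.
Qed.
Section Constr.
Variable k : nat.
Variable a : nat -> nat.
Hypothesis a2 : forall i, i < k -> 1 < a i.

Definition b i := \prod_(j < i) a j.
Definition mm := b k.
Definition g i := mm + b i.

Lemma bS i : b i.+1 = b i * a i.
Proof. by rewrite /b big_ord_recr. Qed.

Lemma b0 : b 0 = 1.
Proof. by rewrite /b big_ord0. Qed.

Lemma b_pos i : i <= k -> 0 < b i.
Proof.
elim: i => [|i IH] hi; first by rewrite b0.
rewrite bS muln_gt0 IH ?(ltnW hi) //; have := a2 hi; lia.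
Qed.

Lemma b_lt i : i < k -> b i < b i.+1.
Proof. move=> hi; rewrite bS; have := a2 hi; have := b_pos (ltnW hi); nia. Qed.

Lemma b_mono i j : i <= j -> j <= k -> b i <= b j.
Proof.
move=> hij; elim: j hij => [|j IH]; first by rewrite leqn0 => /eqP ->.
rewrite leq_eqVlt => /orP[/eqP -> //|hij] hj.
by apply: leq_trans (IH hij (ltnW hj)) (ltnW (b_lt hj)).
Qed.

Lemma b_ltm i : i < k -> b i < mm.
Proof. move=> hi; exact: leq_trans (b_lt hi) (b_mono hi (leqnn _)). Qed.

Lemma mm_pos : 0 < mm.
Proof. exact: b_pos. Qed.

Lemma sum_upd (f w : nat -> nat) j v : j < k ->
  \sum_(i < k) f i * w i + v * w j =
  \sum_(i < k) (f i + (if i == j :> nat then v else 0)) * w i.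
Proof.
move=> hj.
rewrite [RHS](eq_bigr (fun i : 'I_k => f i * w i + (if i == j :> nat then v else 0) * w i));
  last by move=> i _; rewrite mulnDl.
rewrite big_split /=; congr (_ + _).
rewrite (bigD1 (Ordinal hj)) //= eqxx big1 ?addn0 //.
move=> i Hi; rewrite (_ : (i == j :> nat) = false) //.
apply/negbTE; apply: contra Hi => /eqP H; apply/eqP/val_inj => /=; exact H.
Qed.

Lemma sum_pt (f h w : nat -> nat) j v : j < k ->
  (forall i, i < k -> f i + (if i == j then v else 0) = h i) ->
  \sum_(i < k) f i * w i + v * w j = \sum_(i < k) h i * w i.
Proof.
move=> hj H; rewrite sum_upd //; apply: eq_bigr => i _; by rewrite H.
Qed.

Lemma gsumE (mu : nat -> nat) : \sum_(i < k) mu i * g i =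
  mm * \sum_(i < k) mu i + \sum_(i < k) mu i * b i.
Proof.
rewrite big_distrr -big_split; apply: eq_bigr => i _ /=.
by rewrite /g mulnDr [mu i * mm]mulnC.
Qed.

Lemma box_lt n : n <= k -> forall mu, (forall i, i < n -> mu i < a i) ->
  \sum_(i < n) mu i * b i < b n.
Proof.
elim: n => [|n IH] hn mu hmu; first by rewrite big_ord0 b0.
rewrite big_ord_recr /= bS.
have h1 := IH (ltnW hn) mu (fun i hi => hmu i (ltnW hi)).
have h2 := hmu n (ltnSn n).
have h3 : (mu n).+1 * b n <= a n * b n by rewrite leq_mul2r h2 orbT.
rewrite mulSn [b n * a n]mulnC in h3 *.
by apply: leq_trans h3; rewrite -addSn leq_add2r.
Qed.

Lemma digits n : n <= k -> forall r, r < b n -> exists mu : nat -> nat,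
  (forall i, i < n -> mu i < a i) /\ \sum_(i < n) mu i * b i = r.
Proof.
elim: n => [|n IH] hn r hr.
  by exists (fun _ => 0); split => //; move: hr; rewrite b0 big_ord0; case: r.
have bp := b_pos (ltnW hn).
have [mu [hmu smu]] := IH (ltnW hn) (r %% b n) (ltn_pmod _ bp).
exists (fun i => if i == n then r %/ b n else mu i); split.
  move=> i; rewrite ltnS leq_eqVlt => /orP[/eqP ->|hi]; first rewrite eqxx.
    by rewrite ltn_divLR // mulnC -bS.
  by rewrite (ltn_eqF hi) hmu.
rewrite big_ord_recr /= eqxx (eq_bigr (fun i : 'I_n => mu i * b i)); last first.
  by move=> i _; rewrite (ltn_eqF (ltn_ord i)).
by rewrite smu addnC -divn_eq.
Qed.

Lemma digits_uniq n : n <= k -> forall mu nu : nat -> nat,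
  (forall i, i < n -> mu i < a i) -> (forall i, i < n -> nu i < a i) ->
  \sum_(i < n) mu i * b i = \sum_(i < n) nu i * b i ->
  forall i, i < n -> mu i = nu i.
Proof.
elim: n => [|n IH] hn mu nu hmu hnu E i hi //.
have bp := b_pos (ltnW hn).
move: E; rewrite !big_ord_recr /=.
have A := box_lt (ltnW hn) (fun i hi => hmu i (ltnW hi)).
have B := box_lt (ltnW hn) (fun i hi => hnu i (ltnW hi)).
set x := \sum_(i < n) mu i * b i in A *; set y := \sum_(i < n) nu i * b i in B *.
move=> E.
have E1 : mu n = nu n.
  have := congr1 (fun z => z %/ b n) E; rewrite /= ![_ + _ * _]addnC !divnMDl //.
  by rewrite !divn_small // !addn0.
have E2 : x = y.
  have := congr1 (fun z => z %% b n) E; rewrite /= ![_ + _ * _]addnC !modnMDl.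
  by rewrite !modn_small.
move: hi; rewrite ltnS leq_eqVlt => /orP[/eqP -> //|hi].
exact: IH (ltnW hn) mu nu (fun i hi => hmu i (ltnW hi)) (fun i hi => hnu i (ltnW hi)) E2 i hi.
Qed.

Definition box (mu : nat -> nat) := forall i, i < k -> mu i < a i.

Lemma step mu j : j < k -> a j <= mu j -> exists mu2 : nat -> nat,
  (\sum_(i < k) mu2 i + a j = \sum_(i < k) mu i + 1 /\
   \sum_(i < k) mu2 i * b i = \sum_(i < k) mu i * b i) \/
  (\sum_(i < k) mu2 i + a j = \sum_(i < k) mu i /\
   \sum_(i < k) mu2 i * b i + mm = \sum_(i < k) mu i * b i).
Proof.
move=> hj hm.
have cnt : forall f, \sum_(i < k) f i = \sum_(i < k) f i * 1.
  by move=> f; apply: eq_bigr => i _; rewrite muln1.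
case: (ltnP j.+1 k) => hj1.
  exists (fun i => mu i - (if i == j then a j else 0) + (if i == j.+1 then 1 else 0)); left.
  have P : forall i, i < k -> (mu i - (if i == j then a j else 0) + (if i == j.+1 then 1 else 0))
       + (if i == j then a j else 0) = mu i + (if i == j.+1 then 1 else 0).
    move=> i _; case: eqP => [->|nij]; case: eqP => //.
    - by move/n_Sn.
    - by move=> _; rewrite !addn0 subnK.
    - by move=> _; rewrite subn0 addn0.
    - by move=> _; rewrite subn0 !addn0.
  have Q w := etrans (sum_pt w hj P) (esym (sum_upd mu w 1 hj1)).
  split.
    by have := Q (fun _ => 1); rewrite -!cnt !muln1.
  by have := Q b; rewrite bS mul1n [b j * a j]mulnC => /addIn.
have ejk : j.+1 = k by apply/eqP; rewrite eqn_leq hj1 hj.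
exists (fun i => mu i - (if i == j then a j else 0)); right.
have P : forall i, i < k -> (mu i - (if i == j then a j else 0))
       + (if i == j then a j else 0) = mu i.
  by move=> i _; case: eqP => [->|]; rewrite ?subnK ?subn0 ?addn0.
split.
  by have := sum_pt (fun _ => 1) hj P; rewrite -!cnt muln1.
by rewrite -(sum_pt b hj P) /mm -ejk bS mulnC.
Qed.


Lemma notbox mu : ~ box mu -> exists2 j, j < k & a j <= mu j.
Proof.
move=> nb; case: (boolP [forall i : 'I_k, mu i < a i]) => [/forallP H|].
  by case: nb => i hi; exact: (H (Ordinal hi)).
by case/forallPn => j; rewrite -leqNgt => h; exists (nat_of_ord j).
Qed.

Lemma reduce n (mu : nat -> nat) : \sum_(i < k) mu i < n -> exists nu : nat -> nat, exists t,
  [/\ box nu, \sum_(i < k) nu i <= \sum_(i < k) mu i &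
   \sum_(i < k) mu i * b i = \sum_(i < k) nu i * b i + t * mm].
Proof.
elim: n mu => [|n IH] mu hn //.
case: (classic (box mu)) => [bx|nb].
  by exists mu, 0; split; rewrite ?addn0.
have [j hj hm] := notbox nb.
have aj := a2 hj.
have [mu2 [[c1 c2]|[c1 c2]]] := step hj hm.
  have [nu [t [bn s1 s2]]] := IH mu2 ltac:(lia).
  exists nu, t; split => //; [lia | by rewrite -c2].
have [nu [t [bn s1 s2]]] := IH mu2 ltac:(lia).
exists nu, t.+1; split => //; [lia | rewrite -c2 s2 mulSn; lia].
Qed.

Lemma divmod_uniq d q1 r1 q2 r2 : r1 < d -> r2 < d ->
  q1 * d + r1 = q2 * d + r2 -> q1 = q2 /\ r1 = r2.
Proof.
move=> h1 h2 E; have d0 : 0 < d by apply: leq_ltn_trans h1.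
split.
  have := congr1 (fun z => z %/ d) E; rewrite /= !divnMDl //.
  by rewrite !divn_small // !addn0.
have := congr1 (fun z => z %% d) E; rewrite /= !modnMDl.
by rewrite !modn_small.
Qed.

Lemma bsum_bounds (mu : nat -> nat) :
  \sum_(i < k) mu i <= \sum_(i < k) mu i * b i <= mm * \sum_(i < k) mu i.
Proof.
apply/andP; split.
  apply: leq_sum => i _; have := b_pos (ltnW (ltn_ord i)); rewrite -{1}(muln1 (mu i)).
  by move=> h; rewrite leq_mul2l h orbT.
rewrite big_distrr; apply: leq_sum => i _ /=.
by rewrite mulnC leq_mul2r (ltnW (b_ltm (ltn_ord i))) orbT.
Qed.

Lemma sum_single (w : nat -> nat) j v : j < k ->
  \sum_(i < k) (if i == j :> nat then v else 0) * w i = v * w j.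
Proof.
move=> hj; have := sum_upd (fun _ => 0) w v hj.
rewrite big1 // => <- //; by rewrite add0n.
Qed.

Definition Srep x := exists c (mu : nat -> nat), x = c * mm + \sum_(i < k) mu i * g i.
Definition S : pred nat := fun x => if excluded_middle_informative (Srep x) then true else false.

Lemma inS x : x \in S <-> Srep x.
Proof.
rewrite unfold_in /S; case: excluded_middle_informative => //; split => //.
Qed.

Lemma Srep_add x y : Srep x -> Srep y -> Srep (x + y).
Proof.
move=> [c1 [mu1 ->]] [c2 [mu2 ->]]; exists (c1 + c2), (fun i => mu1 i + mu2 i).
rewrite [X in _ = _ + X](eq_bigr (fun i : 'I_k => mu1 i * g i + mu2 i * g i)); last by move=> i _; rewrite mulnDl.
rewrite big_split /= mulnDl; lia.
Qed.

Lemma Srep_mul c : Srep (c * mm).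
Proof. by exists c, (fun _ => 0); rewrite big1 ?addn0. Qed.

Lemma Srep_sum (mu : nat -> nat) : Srep (\sum_(i < k) mu i * g i).
Proof. by exists 0, mu. Qed.

Lemma Srep_elem x : Srep x -> (exists c, x = c * mm) \/ mm < x.
Proof.
move=> [c [mu ->]]; rewrite gsumE; have /andP[h1 h2] := bsum_bounds mu.
case E: (\sum_(i < k) mu i) => [|s].
  left; exists c; move: h2; rewrite E muln0 leqn0 => /eqP ->; lia.
right; rewrite E in h1 h2; rewrite mulnS; lia.
Qed.

Lemma pos_ge x : Srep x -> 0 < x -> mm <= x.
Proof.
move=> /Srep_elem [[c ->]|/ltnW //]; case: c => // c _; rewrite mulSn; lia.
Qed.

Lemma S_notbox (mu : nat -> nat) : ~ box mu ->
  exists2 s, Srep s & \sum_(i < k) mu i * g i = mm + s.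
Proof.
move=> nb; have [j hj hm] := notbox nb; have aj := a2 hj.
have [mu2 [[c1 c2]|[c1 c2]]] := step hj hm.
  exists ((a j - 2) * mm + \sum_(i < k) mu2 i * g i).
    exact: Srep_add (Srep_mul _) (Srep_sum _).
  rewrite !gsumE -c2.
  have -> : \sum_(i < k) mu i = \sum_(i < k) mu2 i + (a j).-1 by lia.
  rewrite mulnDr; have -> : (a j).-1 = 1 + (a j - 2) by lia.
  rewrite mulnDr muln1 [mm * (a j - 2)]mulnC; lia.
exists (a j * mm + \sum_(i < k) mu2 i * g i).
  exact: Srep_add (Srep_mul _) (Srep_sum _).
rewrite !gsumE -c2 -c1 mulnDr [mm * a j]mulnC; lia.
Qed.

Definition apery' x := Srep x /\ ~ (mm <= x /\ Srep (x - mm)).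

Lemma ap_box x : apery' x -> exists2 lam : nat -> nat, box lam & x = \sum_(i < k) lam i * g i.
Proof.
move=> [[c [mu ->]] nap].
case: c nap => [|c] nap; last first.
  case: nap; split; first by rewrite mulSn; lia.
  have -> : c.+1 * mm + \sum_(i < k) mu i * g i - mm = c * mm + \sum_(i < k) mu i * g i.
    rewrite mulSn; lia.
  by exists c, mu.
case: (classic (box mu)) => [bx|nb]; first by exists mu; rewrite ?mul0n ?add0n.
have [s hs E] := S_notbox nb.
case: nap; rewrite mul0n add0n E; split; first lia.
by rewrite addKn.
Qed.

Lemma box_ap (lam : nat -> nat) : box lam -> apery' (\sum_(i < k) lam i * g i).
Proof.
move=> bl; split; first exact: Srep_sum.
move=> [hle [c [mu E]]].
have [nu [t [bn s1 s2]]] := reduce (ltnSn (\sum_(i < k) mu i)).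
have A := box_lt (leqnn k) bl; have B := box_lt (leqnn k) bn.
rewrite -/mm in A B.
have E2 : \sum_(i < k) lam i * mm + \sum_(i < k) lam i * b i =
    (1 + c + \sum_(i < k) mu i + t) * mm + \sum_(i < k) nu i * b i.
  have E' : \sum_(i < k) lam i * g i = mm + (c * mm + \sum_(i < k) mu i * g i) by lia.
  move: E'; rewrite !gsumE s2 -!big_distrl /= ![mm * _]mulnC !mulnDl; lia.
rewrite -big_distrl /= in E2.
have [q1 r1] := divmod_uniq A B E2.
have eqs := digits_uniq (leqnn k) bl bn r1.
have : \sum_(i < k) lam i = \sum_(i < k) nu i by apply: eq_bigr => i _; rewrite eqs.
move=> h; move: s1; rewrite -h q1; set M := \sum_(i < k) mu i; lia.
Qed.

Lemma alpha_ok i : i < k ->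
  apery' ((a i - 1) * g i) /\ forall h, apery' (h * g i) -> h <= a i - 1.
Proof.
move=> hi; split.
  rewrite -(sum_single g (a i - 1) hi).
  apply: (@box_ap (fun j => if j == i then a i - 1 else 0)) => j hj.
  have h1 := a2 hi; have h2 := a2 hj; rewrite /=.
  case: eqP => [e|_]; last by lia.
  rewrite e; lia.
move=> h [hs nap]; rewrite leqNgt; apply/negP => hlt.
have nb : ~ box (fun j => if j == i then h else 0).
  by move/(_ i hi); rewrite eqxx; lia.
have [s Ss E] := S_notbox nb; rewrite sum_single // in E.
by apply: nap; rewrite E; split; [lia | rewrite addKn].
Qed.

Lemma Srep_large n : (\sum_(i < k) a i) * mm <= n -> Srep n.
Proof.
move=> hn; have m0 := mm_pos.
have [lam [bl sl]] := digits (leqnn k) (ltn_pmod n m0).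
have hL : \sum_(i < k) lam i <= \sum_(i < k) a i.
  by apply: leq_sum => i _; apply: ltnW; apply: bl.
have hq : \sum_(i < k) a i <= n %/ mm by rewrite leq_divRL.
exists (n %/ mm - \sum_(i < k) lam i), lam.
rewrite gsumE -/mm sl mulnBl [mm * _]mulnC.
set L := \sum_(i < k) lam i in hL *; set q := n %/ mm in hq *.
have : L * mm <= q * mm by rewrite leq_mul2r; apply/orP; right; exact: leq_trans hL hq.
have := divn_eq n mm; rewrite -/q; lia.
Qed.

Lemma path_g l n x : x < g n -> n + l <= k -> path ltn x (map g (iota n l)).
Proof.
elim: l n x => [|l IH] n x hx hl //=; rewrite hx /=.
apply: IH; last by lia.
by rewrite /g ltn_add2l; apply: b_lt; lia.
Qed.

Definition dec (y : nat) := exists x z, [/\ 0 < x, 0 < z, Srep x, Srep z & x + z = y].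

Lemma mingen_mm : ~ dec mm.
Proof.
move=> [x [z [x0 z0 sx sz e]]]; have := pos_ge sx x0; have := pos_ge sz z0;
  have := mm_pos; lia.
Qed.

Lemma mingen_g i : i < k -> ~ dec (g i).
Proof.
move=> hi [x [z [x0 z0 sx sz e]]].
have bl := b_ltm hi; have bp := b_pos (ltnW hi).
have hx := pos_ge sx x0; have hz := pos_ge sz z0.
move: e; rewrite /g => e.
case: (Srep_elem sx) => [[c1 ec1]|]; last by lia.
case: (Srep_elem sz) => [[c2 ec2]|]; last by lia.
have := @divmod_uniq mm (c1 + c2) 0 1 (b i) mm_pos bl.
rewrite addn0 mulnDl -ec1 -ec2 e mul1n => /(_ erefl) [_ h]; lia.
Qed.

Lemma mingen_inv y : Srep y -> 0 < y -> ~ dec y ->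
  y = mm \/ exists2 i, i < k & y = g i.
Proof.
move=> [c [mu ey]] y0 nd; have m0 := mm_pos.
case: (classic (exists2 i, i < k & 0 < mu i)) => [[i hi mi]|nz].
  pose mu2 := fun j => mu j - (if j == i then 1 else 0).
  have P : forall j, j < k -> mu2 j + (if j == i then 1 else 0) = mu j.
    move=> j _; rewrite /mu2; case: eqP => [->|_]; [exact: subnK | by rewrite subn0 addn0].
  have E := sum_pt g hi P; rewrite mul1n in E.
  have gp : 0 < g i by rewrite /g addn_gt0 m0.
  case: c ey => [|c] ey.
    rewrite mul0n add0n -E in ey.
    case: (posnP (\sum_(j < k) mu2 j * g j)) => [h|h].
      by right; exists i => //; rewrite ey h add0n.
    case: nd; exists (\sum_(j < k) mu2 j * g j), (g i); split => //.
      exact: Srep_sum.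
    by exists 0, (fun j => if j == i then 1 else 0); rewrite sum_single // mul1n.
  case: nd; exists mm, (c * mm + \sum_(j < k) mu j * g j); split => //.
  - rewrite -E; lia.
  - by exists 1, (fun _ => 0); rewrite big1 ?addn0 ?mul1n.
  - exact: Srep_add (Srep_mul _) (Srep_sum _).
  - by rewrite ey mulSn addnA.
have z : \sum_(j < k) mu j * g j = 0.
  rewrite big1 // => j _; have := ltn_ord j; case: (posnP (mu j)) => [->//|h hj].
  by case: nz; exists j.
rewrite z addn0 in ey; case: c ey => [|[|c]] ey.
- by rewrite ey in y0.
- by left; rewrite ey mul1n.
case: nd; exists mm, (c.+1 * mm); split.
- done.
- rewrite mulSn; lia.
- by exists 1, (fun _ => 0); rewrite big1 ?addn0 ?mul1n.
- exact: Srep_mul.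
- by rewrite ey [c.+2 * _]mulSn.
Qed.
End Constr.
Definition gs k a := mm k a :: map (g k a) (iota 0 k).

Lemma nth_gs k a i : i < k -> nth 0 (behead (gs k a)) i = g k a i.
Proof. by move=> hi; rewrite /= (nth_map 0) ?size_iota // nth_iota. Qed.

Lemma aperyE k a x : apery (S k a) (mm k a) x <-> apery' k a x.
Proof.
rewrite /apery /apery'; split => [[/inS h1 h2]|[h1 h2]]; split; first exact: h1.
- by move=> [h3 h4]; apply: h2; split => //; apply/inS.
- exact/inS.
- by move=> [h3 /inS h4]; apply: h2.
Qed.

Lemma mgens k a (a2 : forall i, i < k -> 1 < a i) : minimal_generators (S k a) (gs k a).
Proof.
split.
  apply: path_g => //; by rewrite /g b0 addn1.
move=> y; rewrite /minimal_generator; split.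
  rewrite in_cons => /orP[/eqP ->|/mapP[i]].
    split.
    + by apply/inS; have := Srep_mul k a 1; rewrite mul1n.
    + exact: mm_pos.
    move=> [x [z [x0 z0 sx sz e]]]; apply: (mingen_mm a2).
    by exists x, z; split => //; apply/inS.
  rewrite mem_iota add0n => /andP[_ hi] ->.
  split; first by apply/inS; exists 0, (fun j => if j == i then 1 else 0); rewrite sum_single // mul1n.
    by rewrite /g addn_gt0 mm_pos.
  move=> [x [z [x0 z0 sx sz e]]]; apply: (mingen_g a2 hi).
  by exists x, z; split => //; apply/inS.
move=> [/inS sy y0 nd].
have nd' : ~ dec k a y.
  move=> [x [z [x0 z0 sx sz e]]]; apply: nd; exists x, z; split => //; exact/inS.
case: (mingen_inv a2 sy y0 nd') => [->|[i hi ->]]; first by rewrite mem_head.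
by rewrite in_cons; apply/orP; right; apply/mapP; exists i; rewrite ?mem_iota.
Qed.

Theorem mainTheorem11 (m nu : nat) :
  0 < m -> 2 <= nu -> nu.-1 <= bigomega m ->
  exists S : pred nat,
    [/\ numerical_semigroup S, multiplicity S m,
        embedding_dimension S nu & alpha_rectangular S].
Proof.
move=> m0 nu2 hom.
have k0 : 0 < nu.-1 by lia.
have [a [a2 em]] := factor k0 m0 hom.
have enu : nu = (nu.-1).+1 by lia.
set k := nu.-1 in a2 em enu *.
have -> : m = mm k a by rewrite em.
exists (S k a); split.
- split.
  + by apply/inS; exists 0, (fun _ => 0); rewrite big1.
  + by move=> x y /inS sx /inS sy; apply/inS; exact: Srep_add.
  + exists ((\sum_(i < k) a i) * mm k a) => n hn; apply/inS; exact: Srep_large.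
- split.
  + by apply/inS; have := Srep_mul k a 1; rewrite mul1n.
  + exact: mm_pos.
  + by move=> s /inS ss s0; exact: pos_ge.
- exists (gs k a); split; first exact: mgens.
  by rewrite /= size_map size_iota.
exists (gs k a); split; first exact: mgens.
exists (map (fun i => a i - 1) (iota 0 k)); split.
- by rewrite /= !size_map size_iota.
- move=> i; rewrite size_map size_iota => hi.
  rewrite nth_gs // (nth_map 0) ?size_iota // nth_iota // add0n /is_alpha /=.
  have [h1 h2] := alpha_ok a2 hi.
  split; first by apply/aperyE.
  by move=> h /aperyE; apply: h2.
move=> x; split.
  move=> /aperyE /(ap_box a2) [lam bl ->].
  exists (map lam (iota 0 k)); split.
  + by rewrite !size_map.
  + move=> i; rewrite size_map size_iota => hi.
    rewrite !(nth_map 0) ?size_iota // nth_iota // add0n; have := bl i hi; lia.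
  + rewrite size_map size_iota; apply: eq_bigr => i _.
    by rewrite (nth_map 0) ?size_iota // nth_iota // add0n nth_gs.
move=> [lam [sl hl ->]]; apply/aperyE.
rewrite size_map size_iota in sl hl.
rewrite sl (eq_bigr (fun i : 'I_k => nth 0 lam i * g k a i)); last first.
  by move=> i _; rewrite nth_gs.
apply: (box_ap a2) => i hi; have := hl i; rewrite sl (nth_map 0) ?size_iota // nth_iota //.
have := a2 i hi; move=> h1 /(_ hi); rewrite add0n; lia.
Qed.
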